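(* Assume $G$ is simply laced. Let $\varpi$ be a minuscule fundamental weight, $\bar\phi\in W/W_{P_\varpi}$, $\phi$ the minimal length element of $\bar\phi$, $\phi=s_{\gamma_1}\cdots s_{\gamma_n}$ a reduced expression with simple roots $\gamma_k$, $\beta_k=i(\gamma_k)$, $\alpha_1=\beta_1$ and $\alpha_k=s_{\beta_1}\cdots s_{\beta_{k-1}}(\beta_k)$. Let $\beta$ be the unique simple root with $\langle\beta^\vee,i(\varpi)\rangle=1$. Then for every $i\in[1,n]$, $$\sum_{k\in[i+1,n],\ \beta_k=\beta}\langle\alpha_i^\vee,\alpha_k\rangle=\begin{cases}1 & \text{if }\beta_i\neq\beta,\\ 0&\text{if }\beta_i=\beta.\end{cases}$$
   Context: $G$ is a semisimple algebraic group with maximal torus $T$, Borel subgroup $B$, simple roots $S$, Weyl group $W$ with longest element $w_0$; $s_\alpha$ is the reflection and $\alpha^\vee$ the coroot of a root $\alpha$. The Weyl involution $i$ sends a simple root $\gamma$ to $-w_0(\gamma)$ and a fundamental weight $\varpi$ to $-w_0(\varpi)$. A fundamental weight $\varpi$ is minuscule if $\langle\alpha^\vee,\varpi\rangle\le1$ for all positive roots $\alpha$; $P_\varpi$ is the associated maximal parabolic subgroup and $W_{P_\varpi}$ its Weyl group. *)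

(* Defs.v *)
(* Root datum of a semisimple simply-laced group, encoded by
   its Cartan matrix; all vectors live in Q^r written in the basis of simple
   roots (root lattice (x) Q = weight lattice (x) Q). *)
From mathcomp Require Import all_boot all_order all_algebra.
Set Implicit Arguments. Unset Strict Implicit. Unset Printing Implicit Defensive.
Import GRing.Theory Num.Theory.
Local Open Scope ring_scope.

Section RootDatum.
Variable r : nat.
Variable A : 'M[rat]_r.

Definition simply_laced_cartan : Prop :=
  (forall i, A i i = 2) /\
  (forall i j, i != j -> A i j = A j i /\ (A i j = 0 \/ A i j = -1)) /\
  (forall v : 'rV[rat]_r, v != 0 -> 0 < (v *m A *m v^T) 0 0).

Definition bform (x y : 'rV[rat]_r) : rat := (x *m A *m y^T) 0 0.

Definition coroot_pair (a x : 'rV[rat]_r) : rat := 2 * bform a x / bform a a.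

Definition refl (a x : 'rV[rat]_r) : 'rV[rat]_r := x - coroot_pair a x *: a.

Definition sroot (i : 'I_r) : 'rV[rat]_r := delta_mx 0 i.

(* fundamental weight varpi_j : <alpha_i^vee, varpi_j> = delta_ij *)
Definition fund_weight (j : 'I_r) : 'rV[rat]_r := sroot j *m (invmx A)^T.

Definition wact (w : seq 'I_r) (x : 'rV[rat]_r) : 'rV[rat]_r :=
  foldr (fun i y => refl (sroot i) y) x w.

Definition is_root (x : 'rV[rat]_r) : Prop :=
  exists (w : seq 'I_r) (i : 'I_r), x = wact w (sroot i).

Definition is_pos_root (x : 'rV[rat]_r) : Prop :=
  is_root x /\ forall j, 0 <= x 0 j.

Definition minuscule (p : 'I_r) : Prop :=
  forall a, is_pos_root a -> coroot_pair a (fund_weight p) <= 1.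

Definition reduced (w : seq 'I_r) : Prop :=
  forall v : seq 'I_r, wact v =1 wact w -> (size w <= size v)%N.

Definition longest (w0 : seq 'I_r) : Prop :=
  reduced w0 /\ forall w, reduced w -> (size w <= size w0)%N.

Definition winv (w0 : seq 'I_r) (x : 'rV[rat]_r) : 'rV[rat]_r := - wact w0 x.

(* g is a reduced expression of the minimal length element of the coset
   g W_P, where W_P (Weyl group of P_{varpi_p}) is generated by the simple
   reflections s_j, j != p. *)
Definition min_coset_rep (p : 'I_r) (g : seq 'I_r) : Prop :=
  forall u : seq 'I_r, all (fun j => j != p) u ->
  forall v : seq 'I_r, wact v =1 wact (g ++ u) -> (size g <= size v)%N.

(* alpha_k = s_{beta_1} ... s_{beta_{k-1}} (beta_k)  (0-based k) *)
Definition alpha (betas : seq 'rV[rat]_r) (k : nat) : 'rV[rat]_r :=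
  foldr refl (nth 0 betas k) (take k betas).

End RootDatum.

(* Main.v *)
Require Import Defs.
From mathcomp Require Import all_boot all_order all_algebra.
From mathcomp Require Import ring lra zify.
Set Implicit Arguments. Unset Strict Implicit. Unset Printing Implicit Defensive.
Import Order.TTheory GRing.Theory Num.Theory.
Local Open Scope ring_scope.

Section Basics.
Variable r : nat.
Variable A : 'M[rat]_r.
Hypothesis HA : simply_laced_cartan A.

Notation B := (bform A).
Notation s i := (refl A (sroot i)).
Notation W w := (wact A w).

Lemma Adiag i : A i i = 2. Proof. by case: HA. Qed.
Lemma Asym i j : A i j = A j i.
Proof.
case: (eqVneq i j) => [->//|nij]. by case: HA => _ [/(_ i j nij) [] ].
Qed.
Lemma Aoff i j : i != j -> A i j = 0 \/ A i j = -1.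
Proof. by move=> nij; case: HA => _ [/(_ i j nij) [] ]. Qed.
Lemma Apos (v : 'rV[rat]_r) : v != 0 -> 0 < B v v.
Proof. by case: HA => _ [_ ]; apply. Qed.

Lemma bformE x y : B x y = \sum_i \sum_j x 0 i * A i j * y 0 j.
Proof.
rewrite /bform !mxE; under eq_bigr => j _ do rewrite !mxE big_distrl /=.
by rewrite exchange_big.
Qed.

Lemma bform_sym x y : B x y = B y x.
Proof.
rewrite !bformE exchange_big /=; apply: eq_bigr => i _; apply: eq_bigr => j _.
by rewrite [A j i]Asym; ring.
Qed.

Lemma bformDr x y z : B x (y + z) = B x y + B x z.
Proof. by rewrite /bform linearD /= mulmxDr mxE. Qed.
Lemma bformZr x c y : B x (c *: y) = c * B x y.
Proof. by rewrite /bform linearZ /= -scalemxAr mxE. Qed.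
Lemma bformNr x y : B x (- y) = - B x y.
Proof. by rewrite -scaleN1r bformZr mulN1r. Qed.
Lemma bformBr x y z : B x (y - z) = B x y - B x z.
Proof. by rewrite bformDr bformNr. Qed.
Lemma bform0r x : B x 0 = 0.
Proof. by rewrite -(scale0r 0) bformZr mul0r. Qed.
Lemma bformDl x y z : B (y + z) x = B y x + B z x.
Proof. by rewrite !(bform_sym _ x) bformDr. Qed.
Lemma bformZl x c y : B (c *: y) x = c * B y x.
Proof. by rewrite !(bform_sym _ x) bformZr. Qed.
Lemma bformNl x y : B (- y) x = - B y x.
Proof. by rewrite !(bform_sym _ x) bformNr. Qed.
Lemma bformBl x y z : B (y - z) x = B y x - B z x.
Proof. by rewrite !(bform_sym _ x) bformBr. Qed.
Lemma bform0l x : B 0 x = 0.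
Proof. by rewrite bform_sym bform0r. Qed.

Lemma sroot_coord (i k : 'I_r) : sroot i 0 k = (k == i)%:R.
Proof. by rewrite /sroot mxE. Qed.

Lemma sum_delta (F : 'I_r -> rat) i : \sum_k (k == i)%:R * F k = F i.
Proof.
rewrite (bigD1 i) //= eqxx mul1r [X in _ + X]big1 ?addr0 // => k /negbTE ->.
by rewrite mul0r.
Qed.

Lemma bform_srootl (i : 'I_r) x : B (sroot i) x = \sum_j A i j * x 0 j.
Proof.
rewrite bformE; under eq_bigr => k _ do under eq_bigr => j _ do
  rewrite sroot_coord -mulrA.
rewrite -(sum_delta (fun k => \sum_j A k j * x 0 j) i).
by apply: eq_bigr => k _; rewrite big_distrr.
Qed.

Lemma bform_sroot (i j : 'I_r) : B (sroot i) (sroot j) = A i j.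
Proof.
rewrite bform_srootl; under eq_bigr => k _ do rewrite sroot_coord mulrC.
exact: sum_delta.
Qed.


Lemma cpE a x : coroot_pair A a x = 2 * B a x / B a a.
Proof. by []. Qed.

Lemma cp_root a x : B a a = 2 -> coroot_pair A a x = B a x.
Proof. by move=> h; rewrite cpE h mulrC mulKf. Qed.

Lemma Bss i : B (sroot i) (sroot i) = 2.
Proof. by rewrite bform_sroot Adiag. Qed.

Lemma reflE a x : refl A a x = x - coroot_pair A a x *: a.
Proof. by []. Qed.

Lemma reflD a x y : refl A a (x + y) = refl A a x + refl A a y.
Proof.
rewrite !reflE !cpE bformDr !mulrDr !mulrDl scalerDl; rewrite opprD.
by rewrite addrACA.
Qed.
Lemma reflZ a c x : refl A a (c *: x) = c *: refl A a x.
Proof.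
rewrite !reflE !cpE bformZr scalerBr scalerA; congr (_ - _ *: _).
by ring.
Qed.
Lemma refl0 a : refl A a 0 = 0.
Proof. by have := reflZ a 0 0; rewrite !scale0r. Qed.
Lemma reflN a x : refl A a (- x) = - refl A a x.
Proof. by rewrite -scaleN1r reflZ scaleN1r. Qed.
Lemma reflB a x y : refl A a (x - y) = refl A a x - refl A a y.
Proof. by rewrite reflD reflN. Qed.

Lemma refl_isom a x y : B (refl A a x) (refl A a y) = B x y.
Proof.
rewrite !reflE !cpE bformBl !bformBr !bformZl !bformZr.
have [->|nz] := eqVneq (B a a) 0; first by rewrite !invr0 !mulr0 !mul0r !subr0.
rewrite (bform_sym x a); field; exact: nz.
Qed.

Lemma refl_invol a x : refl A a (refl A a x) = x.
Proof.
rewrite (reflE a (refl A a x)) cpE reflE bformBr bformZr cpE.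
have [->|nz] := eqVneq (B a a) 0; first by rewrite !invr0 !mulr0 !scale0r !subr0.
rewrite -addrA -opprD -scalerDl.
have -> : 2 * B a x / B a a + 2 * (B a x - 2 * B a x / B a a * B a a) / B a a = 0.
  by field.
by rewrite scale0r oppr0 addr0.
Qed.

Lemma cp_isom (f : 'rV[rat]_r -> 'rV[rat]_r) a x :
  (forall u v, B (f u) (f v) = B u v) -> coroot_pair A (f a) (f x) = coroot_pair A a x.
Proof. by move=> h; rewrite !cpE !h. Qed.

Lemma wact_cat u v x : W (u ++ v) x = W u (W v x).
Proof. by rewrite /wact foldr_cat. Qed.
Lemma wact_cons i u x : W (i :: u) x = s i (W u x).
Proof. by []. Qed.
Lemma wact_nil x : W [::] x = x.
Proof. by []. Qed.

Lemma wact_revK w x : W (rev w) (W w x) = x.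
Proof.
elim: w x => [//|i w IH] x.
by rewrite rev_cons -cats1 wact_cat wact_cons /= refl_invol IH.
Qed.
Lemma wactK w x : W w (W (rev w) x) = x.
Proof. by rewrite -{1}(revK w) wact_revK. Qed.

Lemma wactD w x y : W w (x + y) = W w x + W w y.
Proof. by elim: w => [//|i w IH]; rewrite !wact_cons IH reflD. Qed.
Lemma wactZ w c x : W w (c *: x) = c *: W w x.
Proof. by elim: w => [//|i w IH]; rewrite !wact_cons IH reflZ. Qed.
Lemma wactN w x : W w (- x) = - W w x.
Proof. by rewrite -scaleN1r wactZ scaleN1r. Qed.
Lemma wactB w x y : W w (x - y) = W w x - W w y.
Proof. by rewrite wactD wactN. Qed.
Lemma wact0 w : W w 0 = 0.
Proof. by have := wactZ w 0 0; rewrite !scale0r. Qed.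
Lemma wact_isom w x y : B (W w x) (W w y) = B x y.
Proof. by elim: w x y => [//|i w IH] x y; rewrite !wact_cons refl_isom IH. Qed.
Lemma wact_adj w x y : B x (W w y) = B (W (rev w) x) y.
Proof. by rewrite -(wact_isom (rev w)) wact_revK. Qed.
Lemma wact_refl w a x : W w (refl A a x) = refl A (W w a) (W w x).
Proof.
rewrite reflE wactB wactZ reflE; congr (_ - _ *: _).
by rewrite (cp_isom _ _ (wact_isom w)).
Qed.
Lemma wact_inj w x y : W w x = W w y -> x = y.
Proof. by move=> h; rewrite -(wact_revK w x) h wact_revK. Qed.


Definition intv (x : 'rV[rat]_r) := forall j, x 0 j \is a Num.int.
Definition nonneg (x : 'rV[rat]_r) := forall j, 0 <= x 0 j.
Definition nonpos (x : 'rV[rat]_r) := forall j, x 0 j <= 0.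

Lemma Aint i j : A i j \is a Num.int.
Proof.
case: (eqVneq i j) => [->|nij]; first by rewrite Adiag.
by case: (Aoff nij) => ->.
Qed.

Lemma Ale0 i j : i != j -> A i j <= 0.
Proof. by move=> nij; case: (Aoff nij) => ->; rewrite ?lerN10. Qed.

Lemma intv_sroot i : intv (sroot i).
Proof. by move=> j; rewrite sroot_coord; case: (j == i). Qed.

Lemma intv_s i x : intv x -> intv (s i x).
Proof.
move=> hx j; rewrite reflE cp_root ?Bss // bform_srootl !mxE.
rewrite rpredB ?hx // rpredM //; last by case: (_ && _).
by apply: rpred_sum => k _; rewrite rpredM ?Aint ?hx.
Qed.

Lemma intv_root w i : intv (W w (sroot i)).
Proof. by elim: w => [|j w IH]; [exact: intv_sroot | exact: intv_s]. Qed.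

Lemma B_root w i : B (W w (sroot i)) (W w (sroot i)) = 2.
Proof. by rewrite wact_isom Bss. Qed.

Lemma half_int y : intv y -> B y y / 2 \is a Num.int.
Proof.
move=> hy.
pose f i j := y 0 i * A i j * y 0 j.
have split_f i j : f i j = (if (j < i)%N then f i j else 0) + (if (i < j)%N then f i j else 0)
   + (if i == j then f i j else 0).
  case: ltngtP => [h|h|/val_inj ->]; rewrite ?eqxx ?addr0 ?add0r //.
    by rewrite ifF ?addr0 //; apply/negbTE; rewrite -(inj_eq val_inj) /= neq_ltn h orbT.
  by rewrite ifF ?addr0 //; apply/negbTE; rewrite -(inj_eq val_inj) /= neq_ltn h.
have sym_f i j : f i j = f j i by rewrite /f Asym; ring.
have -> : B y y = 2 * (\sum_i y 0 i ^+ 2 + \sum_(i < r) \sum_(j < r) (if (j < i)%N then f i j else 0)).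
  rewrite bformE.
  transitivity (\sum_(i < r) \sum_(j < r) f i j); first by [].
  under eq_bigr => i _ do under eq_bigr => j _ do rewrite split_f.
  under eq_bigr => i _ do rewrite !big_split /=.
  rewrite !big_split /=.
  have -> : \sum_(i < r) \sum_(j < r) (if (i < j)%N then f i j else 0) =
            \sum_(i < r) \sum_(j < r) (if (j < i)%N then f i j else 0).
    rewrite exchange_big /=; apply: eq_bigr => i _; apply: eq_bigr => j _.
    by rewrite sym_f.
  have -> : \sum_(i < r) \sum_(j < r) (if i == j then f i j else 0) = \sum_i 2 * y 0 i ^+ 2.
    apply: eq_bigr => i _; rewrite -big_mkcond /= (big_pred1 i).
      by rewrite /f Adiag; ring.
    by move=> j; rewrite eq_sym.
  by rewrite -big_distrr /= mulrDr; ring.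
rewrite mulrC mulKf //; rewrite rpredD //.
  by apply: rpred_sum => i _; rewrite rpredX ?hy.
apply: rpred_sum => i _; apply: rpred_sum => j _.
by case: ifP => _; rewrite ?rpred0 // /f !rpredM ?hy ?Aint.
Qed.

Lemma B_ge2 y : intv y -> y != 0 -> 2 <= B y y.
Proof.
move=> hy nz; have hp := Apos nz; have hh := half_int hy.
have hn : B y y / 2 != 0 by rewrite mulf_neq0 ?lt0r_neq0 ?invr_neq0.
have := norm_intr_ge1 hh hn; rewrite ger0_norm; last first.
  by rewrite divr_ge0 // Order.POrderTheory.ltW.
by rewrite ler_pdivlMr // mul1r.
Qed.


Lemma sign_coh x : intv x -> B x x = 2 -> nonneg x \/ nonpos x.
Proof.
move=> hx hxx.
pose y := \row_j (if 0 <= x 0 j then x 0 j else 0).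
pose z := \row_j (if 0 <= x 0 j then 0 else - x 0 j).
have hyz j : (y 0 j = x 0 j /\ z 0 j = 0) \/ (y 0 j = 0 /\ z 0 j = - x 0 j).
  by rewrite !mxE; case: ifP => h; [left|right].
have y0 j : 0 <= y 0 j by rewrite mxE; case: ifP.
have z0 j : 0 <= z 0 j.
  by rewrite mxE; case: ifP => // /negbT; rewrite -ltNge oppr_ge0 => /ltW.
have exyz : x = y - z.
  by apply/rowP => j; rewrite !mxE; case: ifP => _; rewrite ?subr0 ?sub0r ?opprK.
have iy : intv y by move=> j; case: (hyz j) => [] [-> _]; rewrite ?hx.
have iz : intv z by move=> j; case: (hyz j) => [] [_ ->]; rewrite ?rpredN ?hx.
have Byz : B y z <= 0.
  rewrite bformE; apply: sumr_le0 => i _; apply: sumr_le0 => j _.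
  case: (eqVneq i j) => [<-|nij].
    by case: (hyz i) => [] [-> ->]; rewrite ?mulr0 ?mul0r.
  by apply: mulr_le0_ge0 => //; apply: mulr_ge0_le0 => //; apply: Ale0.
have eB : B x x = B y y - 2 * B y z + B z z.
  by rewrite exyz !bformBl !bformBr (bform_sym z y); ring.
have [ey|ny] := eqVneq y 0.
  by right => j; rewrite exyz ey sub0r mxE oppr_le0.
have [ez|nz] := eqVneq z 0.
  by left => j; rewrite exyz ez subr0.
have := B_ge2 iy ny; have := B_ge2 iz nz; move: Byz; rewrite hxx in eB.
move=> *; exfalso; lra.
Qed.

Lemma nonneg_nonpos_eq0 x : nonneg x -> nonpos x -> x = 0.
Proof. by move=> h1 h2; apply/rowP => j; rewrite mxE; apply/eqP; rewrite eq_le h1 h2. Qed.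


Lemma s_sroot i : s i (sroot i) = - sroot i.
Proof.
rewrite reflE cp_root ?Bss //.
by apply/rowP => k; rewrite !mxE; ring.
Qed.

Lemma s_coord i x j : j != i -> s i x 0 j = x 0 j.
Proof. by move=> nji; rewrite reflE !mxE (negbTE nji) andbF mulr0 subr0. Qed.

Lemma root_int x : is_root A x -> intv x.
Proof. by case=> w [i ->]; exact: intv_root. Qed.
Lemma root_B x : is_root A x -> B x x = 2.
Proof. by case=> w [i ->]; exact: B_root. Qed.
Lemma root_sign x : is_root A x -> nonneg x \/ nonpos x.
Proof. by move=> h; apply: sign_coh; [exact: root_int | exact: root_B]. Qed.
Lemma root_ne0 x : is_root A x -> x != 0.
Proof. by move=> /root_B h; apply/eqP => e; move: h; rewrite e bform0l. Qed.
Lemma root_N x : is_root A x -> is_root A (- x).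
Proof.
case=> w [i ->]; exists (w ++ [:: i]), i.
by rewrite wact_cat /= s_sroot wactN.
Qed.
Lemma root_W w x : is_root A x -> is_root A (W w x).
Proof. by case=> v [i ->]; exists (w ++ v), i; rewrite wact_cat. Qed.
Lemma root_sroot i : is_root A (sroot i).
Proof. by exists [::], i. Qed.

Lemma nonnegb x : reflect (nonneg x) [forall j, 0 <= x 0 j].
Proof. by apply: (iffP forallP). Qed.

Lemma nonneg_N x : nonneg x -> x != 0 -> ~ nonneg (- x).
Proof.
move=> h nz hn; move/eqP: nz; apply; apply: nonneg_nonpos_eq0 => // j.
by have := hn j; rewrite mxE oppr_ge0.
Qed.

Lemma sq1 (c : rat) : 0 <= c -> c * c = 1 -> c = 1.
Proof. by move=> h1 h2; nra. Qed.

Lemma scal_sroot (y : 'rV[rat]_r) a : (forall j, j != a -> y 0 j = 0) -> y = y 0 a *: sroot a.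
Proof.
move=> h; apply/rowP => j; rewrite !mxE.
by case: (eqVneq j a) => [->|nja]; rewrite ?eqxx ?mulr1 // h // mulr0.
Qed.

Lemma perm_lemma y a : is_root A y -> nonneg y -> ~ nonneg (s a y) -> y = sroot a.
Proof.
move=> ry ny nsy.
have rsy : is_root A (s a y) by apply: (root_W [:: a]).
have psy : nonpos (s a y) by case: (root_sign rsy).
have hj j : j != a -> y 0 j = 0.
  move=> nja; apply/eqP; rewrite eq_le ny -(s_coord y nja) andbT; exact: psy.
have ey := scal_sroot hj.
have := root_B ry; rewrite ey bformZl bformZr Bss => e.
have c1 : y 0 a = 1 by apply: sq1 => //; lra.
rewrite c1; by apply/rowP => k; rewrite !mxE mul1r.
Qed.

Lemma exchange v j : ~ nonneg (W v (sroot j)) ->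
  exists v', (size v').+1 = size v /\ forall x, W v' (s j x) = W v x.
Proof.
elim: v => [|a l IH] h.
  by exfalso; apply: h => k; rewrite wact_nil sroot_coord; case: (k == j).
have [hl|hl] := boolP [forall k, 0 <= W l (sroot j) 0 k].
  move/nonnegb: hl => hl.
  have e := perm_lemma (root_W l (root_sroot j)) hl h.
  exists l; split => // x.
  by rewrite wact_refl e.
have [l' [sz hl']] : exists v', (size v').+1 = size l /\ forall x, W v' (s j x) = W l x.
  by apply: IH => hn; move/nonnegb: hl; apply.
by exists (a :: l'); split; [rewrite /= sz | move=> x; rewrite !wact_cons hl'].
Qed.

Lemma reduced_ext w j : reduced A w -> nonneg (W w (sroot j)) -> reduced A (w ++ [:: j]).
Proof.
move=> rw nn v hv; rewrite size_cat /= addn1 leqNgt; apply/negP => lt.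
have nz : W w (sroot j) != 0 by apply: root_ne0; apply: root_W; apply: root_sroot.
have hv' : ~ nonneg (W v (sroot j)).
  by rewrite hv wact_cat /= s_sroot wactN; apply: nonneg_N.
have [v' [sz hv'']] := exchange hv'.
have : (size w <= size v')%N.
  apply: rw => x; rewrite -[x](refl_invol (sroot j)) hv'' hv wact_cat /= refl_invol.
  by [].
by rewrite -ltnS sz leqNgt lt.
Qed.

Lemma reduced_last w j : reduced A (w ++ [:: j]) -> nonneg (W w (sroot j)).
Proof.
move=> rw; have [//|hn] := boolP [forall k, 0 <= W w (sroot j) 0 k].
  by apply/nonnegb.
have [w' [sz hw']] := exchange (fun h => negP hn (introT (nonnegb _) h)).
have : (size (w ++ [:: j]) <= size w')%N.
  apply: rw => x; rewrite wact_cat /= -hw' refl_invol; by [].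
by rewrite size_cat /= => h; lia.
Qed.

Lemma reduced_rev w : reduced A w -> reduced A (rev w).
Proof.
move=> rw v hv; rewrite size_rev -(size_rev v); apply: rw => x.
by rewrite -[RHS](wact_revK v) hv wact_revK.
Qed.

Lemma reduced_prefix u v : reduced A (u ++ v) -> reduced A u.
Proof.
move=> ruv u' hu'; have := ruv (u' ++ v).
rewrite !size_cat leq_add2r; apply => x; by rewrite !wact_cat hu'.
Qed.

Lemma reduced_suffix u v : reduced A (u ++ v) -> reduced A v.
Proof.
move=> ruv v' hv'; have := ruv (u ++ v').
rewrite !size_cat leq_add2l; apply => x; by rewrite !wact_cat hv'.
Qed.

Lemma longest_neg w0 j : longest A w0 -> nonpos (W w0 (sroot j)).
Proof.
case=> rw lw; case: (root_sign (root_W w0 (root_sroot j))) => // hn.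
have := lw _ (reduced_ext rw hn); by rewrite size_cat /= addn1 ltnn.
Qed.


Lemma int_ge1 (c : rat) : c \is a Num.int -> 0 < c -> 1 <= c.
Proof.
move=> hc hp; have := norm_intr_ge1 hc (lt0r_neq0 hp).
by rewrite ger0_norm // ltW.
Qed.

Lemma B_decomp x y : B x y = \sum_j x 0 j * B (sroot j) y.
Proof.
rewrite bformE; apply: eq_bigr => i _; rewrite bform_srootl big_distrr /=.
by apply: eq_bigr => j _; rewrite mulrA.
Qed.

Lemma B_int i x : intv x -> B (sroot i) x \is a Num.int.
Proof.
by move=> hx; rewrite bform_srootl; apply: rpred_sum => k _; rewrite rpredM ?Aint ?hx.
Qed.

Definition ht (x : 'rV[rat]_r) := \sum_j x 0 j.

Lemma ht_s j x : ht (s j x) = ht x - B (sroot j) x.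
Proof.
rewrite /ht reflE cp_root ?Bss //; under eq_bigr => k _ do rewrite !mxE.
rewrite sumrB -big_distrr /=; congr (_ - _).
have -> : \sum_(i < r) (i == j)%:R = 1 :> rat.
  transitivity (\sum_(i < r) (i == j)%:R * (fun _ => 1 : rat) i).
    by apply: eq_bigr => k _; rewrite mulr1.
  exact: (sum_delta (fun _ => 1) j).
by rewrite mulr1.
Qed.

Lemma ht_ge x j : nonneg x -> x 0 j <= ht x.
Proof.
move=> h; rewrite /ht (bigD1 j) //= lerDl; apply: sumr_ge0 => k _; exact: h.
Qed.

Lemma exists_pos g : is_root A g -> nonneg g ->
  exists j, (0 < g 0 j) && (0 < B (sroot j) g).
Proof.
move=> rg ng.
have [/existsP //|/existsPn hn] := boolP [exists j, (0 < g 0 j) && (0 < B (sroot j) g)].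
have := root_B rg; rewrite B_decomp => e.
have : \sum_j g 0 j * B (sroot j) g <= 0.
  apply: sumr_le0 => j _; have := hn j; rewrite negb_and -!leNgt.
  case/orP => h.
    have e0 : g 0 j = 0 by apply/eqP; rewrite eq_le h ng.
    by rewrite e0 mul0r.
  by apply: mulr_ge0_le0.
by rewrite e; lra.
Qed.

Lemma parab_refl p n g : is_root A g -> nonneg g -> g 0 p = 0 -> ht g <= n%:R ->
  exists u, all (fun j => j != p) u /\ forall x, W u x = refl A g x.
Proof.
elim: n g => [|n IH] g rg ng gp hg;
  have [j /andP [gj Bj]] := exists_pos rg ng.
  by have := ht_ge j ng; lra.
have jp : j != p by apply/eqP => ejp; move: gj; rewrite ejp gp ltxx.
have [egj|negj] := eqVneq g (sroot j).
  by exists [:: j]; split; [rewrite /= jp | move=> x; rewrite egj].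
pose g' := s j g.
have ng' : nonneg g'.
  have [/nonnegb //|hn] := boolP [forall k, 0 <= g' 0 k].
  by exfalso; move/eqP: negj; apply; apply: (perm_lemma rg ng) => h; move/negP: hn; apply; apply/nonnegb.
have rg' : is_root A g' by apply: (root_W [:: j]).
have g'p : g' 0 p = 0 by rewrite /g' s_coord 1?eq_sym.
have c1 := int_ge1 (B_int j (root_int rg)) Bj.
have hg' : ht g' <= n%:R by rewrite /g' ht_s; move: hg; rewrite -natr1; lra.
have [u [hu Wu]] := IH g' rg' ng' g'p hg'.
exists (j :: u ++ [:: j]); split.
  by rewrite /= jp all_cat hu /= jp.
move=> x; rewrite wact_cons wact_cat Wu /=.
have := wact_refl [:: j] g' (s j x); rewrite /= refl_invol => ->.
by rewrite /g' refl_invol.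
Qed.


Lemma A_unit : A \in unitmx.
Proof.
rewrite unitmxE unitfE; apply/negP => /det0P [v nz vA].
have := Apos nz; rewrite /bform vA mul0mx mxE ltxx //.
Qed.

Lemma B_fw x p : B x (fund_weight A p) = x 0 p.
Proof.
rewrite /bform /fund_weight trmx_mul trmxK mulmxA -(mulmxA x) mulmxV ?A_unit //.
by rewrite mulmx1 !mxE (bigD1 p) //= big1 => [|k /= nk]; rewrite !mxE ?eqxx ?(negbTE nk) ?mulr1 ?mulr0 ?addr0.
Qed.

Lemma wact_sum w (F : 'I_r -> 'rV[rat]_r) : W w (\sum_j F j) = \sum_j W w (F j).
Proof. exact: (big_morph _ (wactD w) (wact0 w)). Qed.

Lemma bform_sumr x (F : nat -> 'rV[rat]_r) m n :
  B x (\sum_(m <= k < n) F k) = \sum_(m <= k < n) B x (F k).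
Proof. exact: (big_morph _ (bformDr x) (bform0r x)). Qed.

Lemma T_sroot w0 p q : longest A w0 ->
  coroot_pair A (sroot q) (winv A w0 (fund_weight A p)) = 1 ->
  winv A w0 (sroot p) = sroot q.
Proof.
move=> lw h.
pose T y := winv A w0 y.
have Tlin y : T y = \sum_j y 0 j *: T (sroot j).
  by rewrite /T /winv {1}(row_sum_delta y) wact_sum -sumrN; apply: eq_bigr => j _; rewrite wactZ scalerN.
have Tpos y : nonneg y -> nonneg (T y).
  move=> hy k; rewrite Tlin summxE; apply: sumr_ge0 => j _; rewrite !mxE.
  by apply: mulr_ge0 => //; rewrite oppr_ge0; apply: longest_neg.
pose x := - W (rev w0) (sroot q).
have rx : is_root A x by apply/root_N/root_W/root_sroot.
have xp : x 0 p = 1.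
  move: h; rewrite cp_root ?Bss // /winv bformNr wact_adj -bformNl B_fw //.
have nx : nonneg x.
  case: (root_sign rx) => // hn; have := hn p; rewrite xp; lra.
have Tx : T x = sroot q by rewrite /T /winv /x wactN opprK wactK.
clearbody x.
have nxp : nonneg (x - sroot p).
  move=> k; rewrite !mxE; case: (eqVneq p k) => [<-|npk]; first by rewrite xp /= subrr.
  by rewrite andbF subr0; apply: nx.
have hle := Tpos _ nxp.
have hTp : nonneg (T (sroot p)) by apply: Tpos => k; rewrite sroot_coord; case: (k == p).
have rTp : is_root A (T (sroot p)) by apply/root_N/root_W/root_sroot.
have TB : T (x - sroot p) = T x - T (sroot p) by rewrite /T /winv wactB opprD !opprK.
move: hle; rewrite TB Tx; rewrite -/(T (sroot p)).
move: (T (sroot p)) hTp rTp => y hy ry hle.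
have e0 : forall k, k != q -> y 0 k = 0.
  move=> k nkq; have := hle k; rewrite !mxE (negbTE nkq) andbF => h1.
  by apply/eqP; rewrite eq_le hy andbT; move: h1; rewrite /= mulr0n sub0r oppr_ge0.
have ey := scal_sroot e0.
have := root_B ry; rewrite ey bformZl bformZr Bss => e.
have c1 : y 0 q = 1 by apply: sq1 => //; lra.
by rewrite c1; apply/rowP => k; rewrite !mxE mul1r.
Qed.


Lemma gamma_p p g i : minuscule A p -> min_coset_rep A p g -> (i < size g)%N ->
  W (rev (drop i.+1 g)) (sroot (nth p g i)) 0 p = 1.
Proof.
move=> hmin hc lt.
have rg : reduced A g.
  by move=> v hv; apply: (hc [::]) => // x; rewrite hv cats0.
set a := nth p g i; set u := drop i.+1 g; set P := take i g.
have eg : g = P ++ a :: u by rewrite /P /a /u -drop_nth // cat_take_drop.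
have rr : reduced A (rev u ++ [:: a]).
  apply: (@reduced_prefix _ (rev P)).
  have -> : (rev u ++ [:: a]) ++ rev P = rev g by rewrite eg rev_cat rev_cons cats1.
  exact: reduced_rev.
have nn := reduced_last rr.
set g0 := W (rev u) (sroot a).
have rg0 : is_root A g0 by apply/root_W/root_sroot.
have le1 : g0 0 p <= 1.
  have := hmin g0 (conj rg0 nn); rewrite cp_root ?(root_B rg0) //.
  by rewrite B_fw.
have ig := root_int rg0.
have [e0|ne0] := eqVneq (g0 0 p) 0; last first.
  have gp : 0 < g0 0 p by rewrite lt_neqAle eq_sym ne0 nn.
  have h := int_ge1 (ig p) gp.
  by apply/eqP; rewrite eq_le le1 h.
exfalso.
have hn : ht g0 \is a Num.nat.
  rewrite -intrEge0; first by apply: rpred_sum => j _; exact: ig.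
  by apply: sumr_ge0 => j _; exact: nn.
have [n hn'] := natrP hn.
have hle : ht g0 <= n%:R by rewrite hn'.
have [u' [hu' Wu']] := parab_refl rg0 nn e0 hle.
have h := hc u' hu' (P ++ u).
suff : (size g <= size (P ++ u))%N by rewrite {1}eg !size_cat /= addnS ltnn.
apply: h => x; rewrite !wact_cat Wu' /g0 -[x in refl _ _ x](wact_revK u) -wact_refl.
by rewrite eg wact_cat wact_cons wactK refl_invol.

Qed.


Lemma reflNa a x : refl A (- a) x = refl A a x.
Proof. by rewrite !reflE !cpE bformNl bformNr bformNl opprK scalerN -scaleNr; congr (_ - _ *: _); ring. Qed.

Lemma winv_isom w0 x y : B (winv A w0 x) (winv A w0 y) = B x y.
Proof. by rewrite /winv bformNl bformNr opprK wact_isom. Qed.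

Lemma refl_winv w0 a y : refl A (winv A w0 a) (winv A w0 y) = winv A w0 (refl A a y).
Proof. by rewrite /winv reflNa reflN wact_refl. Qed.

Lemma foldr_winv w0 x l :
  foldr (refl A) (winv A w0 x) [seq winv A w0 (sroot i) | i <- l] = winv A w0 (W l x).
Proof. by elim: l => [//|i l IH] /=; rewrite IH refl_winv. Qed.

Lemma sroot_inj : injective (@sroot r).
Proof.
move=> x y e; have := congr1 (fun v : 'rV[rat]_r => v 0 x) e; rewrite !sroot_coord eqxx.
by case: (eqVneq x y) => // _ /eqP; rewrite oner_eq0.
Qed.

Lemma winv_inj w0 : injective (winv A w0).
Proof. by move=> x y; rewrite /winv => /oppr_inj /wact_inj. Qed.

Lemma wact_rcons l b x : W (rcons l b) x = W l (s b x).
Proof. by rewrite -cats1 wact_cat. Qed.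

Lemma main_sec p q w0 g :
  minuscule A p ->
  longest A w0 ->
  min_coset_rep A p g ->
  coroot_pair A (sroot q) (winv A w0 (fund_weight A p)) = 1 ->
  let betas := [seq winv A w0 (sroot i) | i <- g] in
  forall i : nat, (i < size g)%N ->
    \sum_(i.+1 <= k < size g | nth 0 betas k == sroot q)
        coroot_pair A (alpha A betas i) (alpha A betas k)
    = (if nth 0 betas i != sroot q then 1 else 0).
Proof.
move=> hmin hlong hc hq betas i lt.
have Tp := T_sroot hlong hq.
pose om := fund_weight A p.
pose al k := wact A (take k g) (sroot (nth p g k)).
have nthb k : (k < size g)%N -> nth 0 betas k = winv A w0 (sroot (nth p g k)).
  by move=> hk; rewrite /betas (nth_map p).
have alb k : (k < size g)%N -> alpha A betas k = winv A w0 (al k).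
  move=> hk; rewrite /alpha nthb // /betas -map_take.
  by rewrite foldr_winv.
have ind k : (k < size g)%N -> (nth 0 betas k == sroot q) = (nth p g k == p).
  move=> hk; rewrite nthb // -Tp (inj_eq (@winv_inj w0)) (inj_eq sroot_inj) //.
have ral k : is_root A (al k) by apply/root_W/root_sroot.
have cpal k : (k < size g)%N -> coroot_pair A (alpha A betas i) (alpha A betas k) = bform A (al i) (al k).
  move=> hk; rewrite !alb // (cp_isom _ _ (winv_isom w0)) cp_root //.
  exact: root_B.
pose F k := wact A (take k g) om.
have DF k : (k < size g)%N -> F k - F k.+1 = (p == nth p g k)%:R *: al k.
  move=> hk; rewrite /F (take_nth p) // wact_rcons -wactB reflE opprB addrC subrK.
  by rewrite cp_root ?Bss // /om B_fw sroot_coord wactZ.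
rewrite big_mkcond /=.
rewrite (eq_big_nat _ _ (F2 := fun k => bform A (al i) (F k - F k.+1))); last first.
  move=> k /andP [hk1 hk2]; rewrite ind // cpal // DF // bformZr.
  by rewrite eq_sym; case: (p == nth p g k); rewrite ?mul1r ?mul0r.
rewrite -bform_sumr.
have -> : \sum_(i.+1 <= k < size g) (F k - F k.+1) = F i.+1 - F (size g).
  by rewrite -opprB -telescope_sumr // -sumrN; apply: eq_bigr => k _; rewrite opprB.
rewrite bformBr !wact_adj /F take_size /al.
rewrite (take_nth p) // rev_rcons (wact_cons) wact_revK s_sroot bformNl B_fw sroot_coord.
set a := nth p g i; set u := drop i.+1 g; set P := take i g.
have eg : g = P ++ a :: u by rewrite /P /a /u -drop_nth // cat_take_drop.
rewrite {1}eg rev_cat rev_cons -cats1 -catA wact_cat /= wact_revK s_sroot.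
rewrite wactN bformNl /om B_fw (gamma_p hmin hc lt) ind //.
by rewrite -/a eq_sym; case: (a == p) => /=; ring.
Qed.

End Basics.

Theorem mainTheorem5 (r : nat) (A : 'M[rat]_r) (p q : 'I_r) (w0 g : seq 'I_r) :
  simply_laced_cartan A ->
  minuscule A p ->
  longest A w0 ->
  min_coset_rep A p g ->
  coroot_pair A (sroot q) (winv A w0 (fund_weight A p)) = 1 ->
  let betas := [seq winv A w0 (sroot i) | i <- g] in
  forall i : nat, (i < size g)%N ->
    \sum_(i.+1 <= k < size g | nth 0 betas k == sroot q)
        coroot_pair A (alpha A betas i) (alpha A betas k)
    = (if nth 0 betas i != sroot q then 1 else 0).
Proof. by move=> HA; apply: main_sec. Qed.
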